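(* Let $R$ be a regular ring with unity, let $E$ be its set of idempotents, and let $e,f\in E$. Then $\mathcal L(e)$ and $\mathcal L(f)$ are in perspective in the lattice $L(E)=E/\mathcal L$ if and only if $1\le d_l(e,f)\le 3$.
   Context: A ring is regular if for every $x$ there is $y$ with $xyx=x$. On $E$: $e\,\omega^l\,f$ iff $ef=e$; $e\,\omega^r\,f$ iff $fe=e$; $\mathcal L=\omega^l\cap(\omega^l)^{-1}$, $\mathcal R=\omega^r\cap(\omega^r)^{-1}$ (so $e\,\mathcal L\,f$ iff $Re=Rf$, $e\,\mathcal R\,f$ iff $eR=fR$), with classes $\mathcal L(e)$. $E/\mathcal L$ is ordered by $\mathcal L(e)\le\mathcal L(f)$ iff $e\,\omega^l\,f$; it is isomorphic to the lattice of principal left ideals of $R$ (a complemented modular lattice with least element $\mathcal L(0)$, greatest element $\mathcal L(1)$). Two elements of a lattice are in perspective if they have a common complement. An $E$-sequence of length $m\ge1$ from $e$ to $f$ is a sequence $e=x_0,\dots,x_m=f$ in $E$ with $x_{i-1}\,(\mathcal L\cup\mathcal R)\,x_i$ for each $i$; $d_l(e,f)$ is the least length of an $E$-sequence from $e$ to $f$ with $x_0\,\mathcal L\,x_1$, and $d_l(e,f)=0$ if none exists. *)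

(* Defs.v *)
From mathcomp Require Import all_boot all_algebra.
From mathcomp Require Import boolp.
Set Implicit Arguments. Unset Strict Implicit. Unset Printing Implicit Defensive.
Import GRing.Theory.
Local Open Scope ring_scope.

Section RegularRings.
Variable R : pzRingType.

Definition regular_ring : Prop := forall x : R, exists y : R, x * y * x = x.

Definition idem (e : R) : Prop := e * e = e.

Definition omega_l (e f : R) : Prop := e * f = e.
Definition omega_r (e f : R) : Prop := f * e = e.

Definition rel_L (e f : R) : Prop := omega_l e f /\ omega_l f e.
Definition rel_R (e f : R) : Prop := omega_r e f /\ omega_r f e.

(* The lattice L(E) = E/L, ordered by L(e) <= L(f) iff e omega^l f, with
   least element L(0) and greatest element L(1).  Since L(E) is a lattice,
   L(e) /\ L(g) = L(0) iff every common lower bound (in E) of e and g is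
   below 0, and L(e) \/ L(g) = L(1) iff every common upper bound is above 1. *)
Definition Lmeet_is_bot (e g : R) : Prop :=
  forall c, idem c -> omega_l c e -> omega_l c g -> omega_l c 0.
Definition Ljoin_is_top (e g : R) : Prop :=
  forall c, idem c -> omega_l e c -> omega_l g c -> omega_l 1 c.

Definition Lcomplement (e g : R) : Prop := Lmeet_is_bot e g /\ Ljoin_is_top e g.

Definition L_perspective (e f : R) : Prop :=
  exists g, idem g /\ Lcomplement e g /\ Lcomplement f g.

Definition Eseq_l (e f : R) (m : nat) : Prop :=
  (1 <= m)%N /\
  exists x : nat -> R,
    [/\ x 0%N = e, x m = f,
        (forall i, (i <= m)%N -> idem (x i)),
        (forall i, (1 <= i <= m)%N -> rel_L (x i.-1) (x i) \/ rel_R (x i.-1) (x i))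
      & rel_L (x 0%N) (x 1%N)].

Definition d_l (e f : R) : nat :=
  match pselect (exists m, Eseq_l e f m) with
  | left H =>
      @ex_minn (fun m => `[< Eseq_l e f m >])
        (let: ex_intro m Hm := H in ex_intro _ m (asboolT Hm))
  | right _ => 0%N
  end.

End RegularRings.

(* Main.v *)
Require Import Defs.
From mathcomp Require Import all_boot all_algebra boolp.
Import GRing.Theory.
Local Open Scope ring_scope.

Section S.
Context {R : pzRingType}.
Implicit Types e f a b g c x y : R.

Lemma comp_one x b a : x * b = x -> b * x = b -> a * b = b -> b * a = a ->
  idem a -> Lcomplement x (1 - a).
Proof.
move=> xb bx ab ba aa; split.
- move=> c cc cx ca; rewrite /omega_l mulr0.
  have cb : c * b = c by rewrite -[in LHS]cx -mulrA xb cx.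
  by rewrite -cb -[c in c * b]ca -mulrA mulrBl mul1r ab subrr mulr0.
- move=> c cc xc ac; rewrite /omega_l mul1r.
  move: ac; rewrite /omega_l mulrBl mul1r => ac.
  have bc : b * c = b by rewrite -[in LHS]bx -mulrA xc bx.
  have : b * (c - a * c) = b * (1 - a) by rewrite ac.
  rewrite !mulrBr mulr1 mulrA ba bc => /eqP; rewrite (inj_eq (addrI b)) eqr_opp => /eqP acE.
  by move: ac; rewrite acE => /eqP; rewrite (inj_eq (addIr (-a))) => /eqP.
Qed.

Lemma backward e a b f : idem a -> rel_L e a -> rel_R a b -> rel_L b f ->
  L_perspective e f.
Proof.
move=> aa [ea ae] [ba ab] [bf fb]; exists (1 - a); split; last split.
- by rewrite /idem mulrBl mul1r !mulrBr mulr1 aa subrr subr0.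
- exact: (comp_one _ _ _ ea ae aa aa aa).
- exact: (comp_one _ _ _ fb bf ab ba aa).
Qed.

Lemma meet0 e g : regular_ring R -> Lmeet_is_bot e g ->
  forall x, x * e = x -> x * g = x -> x = 0.
Proof.
move=> Hreg H x xe xg; have [y xyx] := Hreg x.
have cc : idem (y * x) by rewrite /idem -mulrA [x * (y * x)]mulrA xyx.
have ce : y * x * e = y * x by rewrite -mulrA xe.
have cg : y * x * g = y * x by rewrite -mulrA xg.
have := H _ cc ce cg; rewrite /omega_l mulr0 => c0.
by rewrite -xyx -mulrA -c0 mulr0.
Qed.

Lemma decomp e g : regular_ring R -> idem e -> idem g -> Lcomplement e g ->
  exists a, [/\ idem a, rel_L e a, g * a = 0 & (1 - a) * g = 1 - a].
Proof.
move=> Hreg ee gg [Hm Hj].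
have Z := meet0 _ _ Hreg Hm.
have e1e : e * (1 - e) = 0 by rewrite mulrBr mulr1 ee subrr.
have e1e' : (1 - e) * e = 0 by rewrite mulrBl mul1r ee subrr.
pose h := g * (1 - e).
have [y hyh] := Hreg h.
pose k := y * h.
have kk : k * k = k by rewrite /k -mulrA [h * (y * h)]mulrA hyh.
have ke : k * e = 0 by rewrite /k /h -!mulrA e1e' !mulr0.
pose k' := (1 - e) * k.
have k'e : k' * e = 0 by rewrite /k' -mulrA ke mulr0.
have ek' : e * k' = 0 by rewrite /k' mulrA e1e mul0r.
have kk' : k * k' = k by rewrite /k' mulrA mulrBr mulr1 mulrBl ke mul0r subr0 kk.
have k'k' : k' * k' = k' by rewrite {1}/k' -mulrA kk'.
pose c := e + k'.
have cc : idem c by rewrite /idem /c mulrDl !mulrDr ee ek' k'e k'k' addr0 add0r.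
have ec : e * c = e by rewrite /c mulrDr ee ek' addr0.
have hk : h * k = h by rewrite /k mulrA hyh.
have kc : k * c = k by rewrite /c mulrDr ke add0r kk'.
have gh : g = g * e + h by rewrite /h mulrBr mulr1 addrC subrK.
have gc : g * c = g by rewrite {1}gh mulrDl -mulrA ec -hk -mulrA kc hk -gh.
have := Hj c cc ec gc; rewrite /omega_l mul1r => c1.
pose a' := (1 - e) * y * g.
have a'g : a' * g = a' by rewrite /a' -mulrA gg.
have k'E : k' = a' * (1 - e) by rewrite /k' /a' /k /h !mulrA.
have ea' : e * a' = 0 by rewrite /a' !mulrA e1e !mul0r.
have a1e : (1 - a') * (1 - e) = 0.
  by rewrite mulrBl mul1r -k'E; move: c1; rewrite /c => <-; rewrite [e + k']addrC addrK subrr.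
exists (1 - a').
have ae : (1 - a') * e = 1 - a'.
  by apply/esym/subr0_eq; move: a1e; rewrite mulrBr mulr1.
have ea : e * (1 - a') = e by rewrite mulrBr mulr1 ea' subr0.
have a'E : 1 - (1 - a') = a' by rewrite opprB addrC subrK.
have aa : idem (1 - a').
  have : (1 - a') * a' = 0.
    apply: Z.
    - have a'e : a' * e = e - (1 - a') by rewrite -ae mulrBl mul1r opprB addrC subrK.
      by rewrite -mulrA a'e mulrBr ae -[X in _ = _ * X]a'E [in RHS]mulrBr mulr1.
    - by rewrite -mulrA a'g.
  by rewrite -[X in _ * X = 0]a'E mulrBr mulr1 => /subr0_eq /esym.
split => //.
- apply: Z.
  + by rewrite -mulrA ae.
  + by rewrite -mulrA mulrBl mul1r a'g !mulrBr gg mulr1.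
- by rewrite a'E a'g.
Qed.

Lemma refl_L x : idem x -> rel_L x x. Proof. by move=> xx; split. Qed.
Lemma refl_R x : idem x -> rel_R x x. Proof. by move=> xx; split. Qed.
Lemma trans_L {x y z : R} : rel_L x y -> rel_L y z -> rel_L x z.
Proof.
move=> [xy yx] [yz zy]; split; rewrite /omega_l.
- by rewrite -[in LHS]xy -mulrA yz xy.
- by rewrite -[in LHS]zy -mulrA yx zy.
Qed.
Lemma trans_R {x y z : R} : rel_R x y -> rel_R y z -> rel_R x z.
Proof.
move=> [xy yx] [yz zy]; split; rewrite /omega_r.
- by rewrite -[in LHS]xy mulrA yz xy.
- by rewrite -[in LHS]zy mulrA yx zy.
Qed.

Arguments backward {e a b f}.
Arguments refl_L {x}.
Arguments refl_R {x}.

Lemma seq3 {e x1 x2 f : R} : idem x1 -> idem x2 -> idem f -> rel_L e x1 ->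
  (rel_L x1 x2 \/ rel_R x1 x2) -> (rel_L x2 f \/ rel_R x2 f) -> L_perspective e f.
Proof.
move=> i1 i2 i3 L1 [L2|R2] [L3|R3].
- exact: (backward i3 (trans_L (trans_L L1 L2) L3) (refl_R i3) (refl_L i3)).
- exact: (backward i2 (trans_L L1 L2) R3 (refl_L i3)).
- exact: (backward i1 L1 R2 L3).
- exact: (backward i1 L1 (trans_R R2 R3) (refl_L i3)).
Qed.
End S.
Arguments decomp {R e g}.
Arguments refl_L {R x}.
Arguments refl_R {R x}.

Theorem proposition4p3 (R : pzRingType) (Hreg : regular_ring R) (e f : R) :
  idem e -> idem f ->
  (L_perspective e f <-> (1 <= d_l e f <= 3)%N).
Proof.
move=> ee ff; split.
- case=> g [gg [Ce Cf]].
  have [a [aa [ea ae] ga a1g]] := decomp Hreg ee gg Ce.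
  have [b [bb [fb bf] gb b1g]] := decomp Hreg ff gg Cf.
  have ab : a * b = b.
    apply/esym/subr0_eq; rewrite -[X in X - _]mul1r -mulrBl -a1g -mulrA gb.
    by rewrite mulr0.
  have ba : b * a = a.
    apply/esym/subr0_eq; rewrite -[X in X - _]mul1r -mulrBl -b1g -mulrA ga.
    by rewrite mulr0.
  have E3 : Eseq_l e f 3.
    split => //.
    exists (fun i => match i with 0 => e | 1 => a | 2 => b | _ => f end).
    split => //.
    + by case=> [|[|[|[|i]]]].
    + case=> [|[|[|[|i]]]] //= _.
      * by left.
      * by right.
      * by left.
  rewrite /d_l; case: pselect => [H|H]; last by exfalso; apply: H; exists 3%N.
  case: ex_minnP => m /asboolP [m1 _] Hmin.
  by rewrite m1 /=; exact: Hmin _ (asboolT E3).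
- rewrite /d_l; case: pselect => [H|H]; last by [].
  case: ex_minnP => m /asboolP Hm _ /andP[m1 m3].
  move: Hm => [_ [x [x0 xm xid xst xL]]].
  rewrite -x0 -xm.
  case: m m1 m3 xm xid xst => [|[|[|[|m]]]] // _ _ xm xid xst.
  + exact: (seq3 (xid 1%N isT) (xid 1%N isT) (xid 1%N isT) xL
      (or_introl (refl_L (xid 1%N isT))) (or_introl (refl_L (xid 1%N isT)))).
  + exact: (seq3 (xid 1%N isT) (xid 2%N isT) (xid 2%N isT) xL
      (xst 2%N isT) (or_introl (refl_L (xid 2%N isT)))).
  + exact: (seq3 (xid 1%N isT) (xid 2%N isT) (xid 3%N isT) xL
      (xst 2%N isT) (xst 3%N isT)).
Qed.
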